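(* Let $\Phi$ be a rooted triple formula all of whose clauses are tame. If the graph $F_\Phi$ is connected, then $\Phi$ is unsatisfiable.
   Context: Rooted triple formula: conjunction of clauses, each a disjunction of literals $xy|z$, with the convention that no literal has the form $xx|y$, $xy|x$ or $xy|y$. Satisfiable: there is a rooted binary tree $T$ (root has two neighbours, every other vertex three or one) and a map $\alpha$ from variables to leaves of $T$ such that each clause contains a literal $xy|z$ with $\alpha(x),\alpha(y),\alpha(z)$ pairwise distinct and $\mathrm{yca}(\alpha(x),\alpha(y))$ strictly below $\mathrm{yca}(\alpha(x),\alpha(z))$ (yca = common ancestor farthest from the root). A clause is trivial if it is satisfied by every injective map of its variables into the leaves of every rooted binary tree. A clause $x_1y_1|z_1\vee\dots\vee x_py_p|z_p$ is tame if it is trivial or $\{x_i,y_i\}=\{x_j,y_j\}$ for all $i,j$. For $\Phi$ with tame clauses, $F_\Phi$ is the graph on the variables of $\Phi$ with an edge $\{x,y\}$ iff $\Phi$ contains a clause $xy|z_1\vee\dots\vee xy|z_p$ with $p\ge1$. *)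

(* Defs.v *)
From mathcomp Require Import all_boot.
Set Implicit Arguments. Unset Strict Implicit. Unset Printing Implicit Defensive.

(* Vertices are addressed by
   their path from the root (false = left child, true = right child). *)
Inductive tree := Leaf | Node of tree & tree.

Fixpoint is_leaf (t : tree) (p : seq bool) : bool :=
  match t, p with
  | Leaf, [::] => true
  | Node l r, b :: p' => is_leaf (if b then r else l) p'
  | _, _ => false
  end.

(* The paper's rooted binary tree: the root has two neighbours. *)
Definition rooted_binary (t : tree) : bool :=
  if t is Node _ _ then true else false.

(* Longest common prefix = address of the youngest common ancestor. *)
Fixpoint lcp (a b : seq bool) : seq bool :=
  match a, b with
  | x :: a', y :: b' => if x == y then x :: lcp a' b' else [::]
  | _, _ => [::]
  end.

Definition yca (a b : seq bool) : seq bool := lcp a b.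

Definition strictly_below (u v : seq bool) : bool := prefix v u && (v != u).

(* Variables are natural numbers; a literal xy|z is the triple (x, y, z). *)
Definition literal := (nat * nat * nat)%type.
Definition clause := seq literal.
Definition formula := seq clause.

Definition lit_vars (l : literal) : seq nat :=
  let: (x, y, z) := l in [:: x; y; z].
Definition clause_vars (C : clause) : seq nat := flatten (map lit_vars C).
Definition formula_vars (Phi : formula) : seq nat :=
  flatten (map clause_vars Phi).

(* Convention: no literal of the form xx|y, xy|x, xy|y. *)
Definition lit_wf (l : literal) : bool :=
  let: (x, y, z) := l in [&& x != y, x != z & y != z].
Definition formula_wf (Phi : formula) : bool := all (all lit_wf) Phi.

Definition lit_sat (a : nat -> seq bool) (l : literal) : bool :=
  let: (x, y, z) := l in
  [&& a x != a y, a x != a z, a y != a z &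
      strictly_below (yca (a x) (a y)) (yca (a x) (a z))].

Definition clause_sat (a : nat -> seq bool) (C : clause) : bool :=
  has (lit_sat a) C.

Definition satisfiable (Phi : formula) : Prop :=
  exists (t : tree) (a : nat -> seq bool),
    [/\ rooted_binary t,
        (forall x, x \in formula_vars Phi -> is_leaf t (a x)) &
        all (clause_sat a) Phi].

Definition trivial_clause (C : clause) : Prop :=
  forall (t : tree) (a : nat -> seq bool),
    rooted_binary t ->
    (forall x, x \in clause_vars C -> is_leaf t (a x)) ->
    {in clause_vars C &, injective a} ->
    clause_sat a C.

Definition lit_pair_is (u v : nat) (l : literal) : bool :=
  let: (x, y, _) := l in ((x == u) && (y == v)) || ((x == v) && (y == u)).

Definition same_pairs (C : clause) : Prop :=
  forall l1 l2, l1 \in C -> l2 \in C ->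
    let: (x, y, _) := l1 in lit_pair_is x y l2.

Definition tame (C : clause) : Prop := trivial_clause C \/ same_pairs C.

Definition F_edge (Phi : formula) (x y : nat) : bool :=
  (x != y) &&
  has (fun C => (C != [::]) && all (lit_pair_is x y) C) Phi.

(* Connectedness of F_Phi on the vertex set formula_vars Phi
   (a connected graph is nonempty). *)
Definition F_connected (Phi : formula) : Prop :=
  formula_vars Phi != [::] /\
  forall u v, u \in formula_vars Phi -> v \in formula_vars Phi ->
    exists p : seq nat, path (F_edge Phi) u p /\ last u p = v.

(* Main.v *)
Require Import Defs.
From mathcomp Require Import all_boot.
Set Implicit Arguments. Unset Strict Implicit. Unset Printing Implicit Defensive.

Lemma lcp_prefl (s t : seq bool) : prefix (lcp s t) s.
Proof.
elim: s t => [|x s IH] [|y t] //=; case: eqP => // _ /=; rewrite eqxx; exact: IH.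
Qed.

Lemma lcp_prefr (s t : seq bool) : prefix (lcp s t) t.
Proof.
elim: s t => [|x s IH] [|y t] //=; case: eqP => //= -> ; rewrite eqxx; exact: IH.
Qed.

Lemma lcp_max (c s t : seq bool) : prefix c s -> prefix c t -> prefix c (lcp s t).
Proof.
elim: c s t => [|x c IH]; first by move=> *; exact: prefix0s.
case=> [|y s] [|z t] //=.
move=> /andP[/eqP <- Hs] /andP[/eqP <- Ht].
by rewrite eqxx /= eqxx IH.
Qed.

Lemma pref_ext (c s : seq bool) : prefix c s -> size c < size s ->
  exists b, prefix (rcons c b) s.
Proof.
elim: c s => [|x c IH] [|y s] //=.
  by move=> _ _; exists y; rewrite /= eqxx prefix0s.
move=> /andP[/eqP -> H]; rewrite ltnS => /(IH _ H) [b Hb]; exists b.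
by rewrite /= eqxx.
Qed.

Lemma pref_uniq (c s : seq bool) b1 b2 :
  prefix (rcons c b1) s -> prefix (rcons c b2) s -> b1 = b2.
Proof.
elim: c s => [|x c IH] [|y s] //=.
  by move=> /andP[/eqP -> _] /andP[/eqP -> _].
by move=> /andP[_ H1] /andP[_ H2]; exact: IH H1 H2.
Qed.

Lemma pref_size_eq (v u : seq bool) : prefix v u -> size v = size u -> v = u.
Proof. by rewrite prefixE => /eqP Hv Hs; rewrite -Hv Hs take_size. Qed.

Lemma sb_size (u v : seq bool) : strictly_below u v -> prefix v u /\ size v < size u.
Proof.
move=> /andP[Hp Hne]; split=> //; rewrite ltn_neqAle size_prefix // andbT.
by apply/negP => /eqP /(pref_size_eq Hp) E; rewrite E eqxx in Hne.
Qed.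

Lemma in_vars (Phi : formula) C (l : literal) w :
  C \in Phi -> l \in C -> w \in lit_vars l -> w \in formula_vars Phi.
Proof.
move=> HC Hl Hw; apply/flatten_mapP; exists C => //; apply/flatten_mapP; exists l => //.
Qed.

Lemma edge_lemma (Phi : formula) (a : nat -> seq bool) (c : seq bool) x y :
  (forall w, w \in formula_vars Phi -> prefix c (a w)) ->
  all (clause_sat a) Phi -> F_edge Phi x y ->
  exists b, prefix (rcons c b) (a x) /\ prefix (rcons c b) (a y).
Proof.
move=> Hc Hsat /andP[_ /hasP[C CPhi /andP[_ Hall]]].
have /hasP[[[p q] z] lC Hl] := allP Hsat C CPhi.
have Hpair := allP Hall _ lC.
have Hp : prefix c (a p) by apply: Hc; apply: (in_vars CPhi lC); rewrite !inE eqxx.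
have Hq : prefix c (a q) by apply: Hc; apply: (in_vars CPhi lC); rewrite !inE eqxx ?orbT.
have Hz : prefix c (a z) by apply: Hc; apply: (in_vars CPhi lC); rewrite !inE eqxx ?orbT.
move: Hl => /and4P[_ _ _ /sb_size [HML Hsz]].
have HcM : prefix c (lcp (a p) (a z)) by apply: lcp_max.
have HcL : prefix c (lcp (a p) (a q)) by apply: prefix_trans HML.
have [b Hb] := pref_ext HcL (leq_ltn_trans (size_prefix HcM) Hsz).
have Hbp := prefix_trans Hb (lcp_prefl _ _).
have Hbq := prefix_trans Hb (lcp_prefr _ _).
exists b; move: Hpair => /= /orP[] /andP[/eqP Ex /eqP Ey]; subst; by split.
Qed.

Lemma fold_pref (L : seq (seq bool)) d s : s \in L -> prefix (foldr lcp d L) s.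
Proof.
elim: L => [|h L IH] //=; rewrite inE => /orP[/eqP -> | Hs]; first exact: lcp_prefl.
exact: prefix_trans (lcp_prefr _ _) (IH Hs).
Qed.

Lemma fold_max (L : seq (seq bool)) d e :
  (forall s, s \in L -> prefix e s) -> prefix e d -> prefix e (foldr lcp d L).
Proof.
elim: L => [|h L IH] //= H Hd; apply: lcp_max; first by apply: H; rewrite inE eqxx.
by apply: IH => // s Hs; apply: H; rewrite inE Hs orbT.
Qed.

Lemma path_pref (Phi : formula) (a : nat -> seq bool) c b q st :
  (forall w, w \in formula_vars Phi -> prefix c (a w)) ->
  all (clause_sat a) Phi ->
  prefix (rcons c b) (a st) -> path (F_edge Phi) st q ->
  prefix (rcons c b) (a (last st q)).
Proof.
move=> Hc Hsat; elim: q st => [|q1 q IH] st //= Hst /andP[He Hp].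
apply: IH => //.
have [b' [H1 H2]] := edge_lemma Hc Hsat He.
by rewrite (pref_uniq Hst H1).
Qed.

Theorem mainTheorem7 (Phi : formula) :
  formula_wf Phi ->
  (forall C, C \in Phi -> tame C) ->
  F_connected Phi ->
  ~ satisfiable Phi.
Proof.
move=> Hwf _ [Hne Hcon] [t [a [_ _ Hsat]]].
have [v0 Hv0] : exists v0, v0 \in formula_vars Phi.
  by case: (formula_vars Phi) Hne => [|v ?] //; exists v; rewrite inE eqxx.
have /flatten_mapP [C CPhi /flatten_mapP [[[x y] z] lC _]] := Hv0.
have Hxy : x != y by have := allP (allP Hwf C CPhi) _ lC => /= /and3P[].
have Hx : x \in formula_vars Phi by apply: (in_vars CPhi lC); rewrite !inE eqxx.
have Hy : y \in formula_vars Phi by apply: (in_vars CPhi lC); rewrite !inE eqxx ?orbT.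
set c := foldr lcp (a x) (map a (formula_vars Phi)).
have Hc : forall w, w \in formula_vars Phi -> prefix c (a w).
  by move=> w Hw; apply: fold_pref; apply: map_f.
have [p [Hp Hl]] := Hcon x y Hx Hy.
case: p Hp Hl => [|x1 p] /=; first by move=> _ E; rewrite E eqxx in Hxy.
move=> /andP[He _] _.
have [b [Hb _]] := edge_lemma Hc Hsat He.
have Hall : forall w, w \in formula_vars Phi -> prefix (rcons c b) (a w).
  move=> w Hw; have [q [Hq Hlq]] := Hcon x w Hx Hw.
  by rewrite -Hlq; apply: (path_pref Hc Hsat Hb Hq).
have : prefix (rcons c b) c.
  apply: fold_max; last exact: Hall.
  by move=> s /mapP [w Hw ->]; apply: Hall.
by move/size_prefix; rewrite size_rcons ltnn.
Qed.
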